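(* Let $n>2$ and $1<p<\infty$. Let $\Delta_n=\{\mathbf{s}\in\mathbb{R}^n: s_i\ge0\ \forall i,\ \sum_i s_i=1\}$ and for $\mathbf{s}\in\Delta_n$ let $M(\mathbf{s})=\operatorname{Diag}(\mathbf{s})-\mathbf{s}\mathbf{s}^\top\in\mathbb{R}^{n\times n}$. Then for $\mathbf{s}\in\Delta_n$, $\|M(\mathbf{s})\|_p=\tfrac12$ if and only if $\mathbf{s}$ is a coordinate permutation of $(1/2,1/2,0,\dots,0)$.
   Context: For $p\in[1,\infty)$, $\|\mathbf{x}\|_p=(\sum_i|x_i|^p)^{1/p}$; for a square matrix $A$, $\|A\|_p=\sup_{\mathbf{v}\ne0}\|A\mathbf{v}\|_p/\|\mathbf{v}\|_p$ is the induced operator norm. $\operatorname{Diag}(\mathbf{s})$ is the diagonal matrix with diagonal $\mathbf{s}$. *)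

(* Defs.v *)
From HB Require Import structures.
From mathcomp Require Import all_boot all_order all_algebra.
From mathcomp Require Import perm.
From mathcomp Require Import all_classical all_reals all_analysis.
Set Implicit Arguments. Unset Strict Implicit. Unset Printing Implicit Defensive.
Import Order.TTheory GRing.Theory Num.Theory.
Local Open Scope classical_set_scope.
Local Open Scope ring_scope.

Definition pnorm (R : realType) (n : nat) (p : R) (x : 'cV[R]_n) : R :=
  (\sum_(i < n) `|x i 0| `^ p) `^ p^-1.

Definition opnorm (R : realType) (n : nat) (p : R) (A : 'M[R]_n) : R :=
  sup [set r : R | exists v : 'cV[R]_n, v != 0 /\ r = pnorm p (A *m v) / pnorm p v].

Definition in_simplex (R : realType) (n : nat) (s : 'cV[R]_n) : Prop :=
  (forall i, 0 <= s i 0) /\ \sum_(i < n) s i 0 = 1.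

Definition Mmat (R : realType) (n : nat) (s : 'cV[R]_n) : 'M[R]_n :=
  diag_mx s^T - s *m s^T.

Definition half_half (R : realType) (n : nat) : 'cV[R]_n :=
  \col_(i < n) (if (i < 2)%N then 2^-1 else 0).

(* Main.v *)
Require Import Defs.
From HB Require Import structures.
From mathcomp Require Import all_boot all_order all_algebra.
From mathcomp Require Import perm.
From mathcomp Require Import all_classical all_reals all_analysis.
From mathcomp.algebra_tactics Require Import ring lra.
Import Order.TTheory GRing.Theory Num.Theory.
Local Open Scope ring_scope.

Lemma tangent (R : realType) (p t m : R) : 1 < p -> 0 <= t -> 0 <= m ->
  p * t * m `^ (p - 1) - (p - 1) * m `^ p <= t `^ p.
Proof.
move=> p1 t0 m0.
have p0 : 0 < p by apply: lt_trans p1.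
have p10 : 0 < p - 1 by rewrite subr_gt0.
pose q := p / (p - 1).
have q0 : 0 < q by rewrite divr_gt0.
have pq : p^-1 + q^-1 = 1.
  rewrite /q invf_div; field; rewrite gt_eqF //.
have := conjugate_powR t0 (powR_ge0 m (p-1)) p0 q0 pq.
rewrite -powRrM.
have -> : (p - 1) * q = p by rewrite /q; field; rewrite gt_eqF.
move=> H.
have := ler_wpM2l (ltW p0) H.
have -> : p * (t `^ p / p + m `^ p / q) = t `^ p + (p - 1) * m `^ p.
  by rewrite /q; field; rewrite ?gt_eqF.
move=> H2; lra.
Qed.

Lemma jensen (R : realType) (I : finType) (a x : I -> R) (p : R) :
  1 < p -> (forall i, 0 <= a i) -> (forall i, 0 <= x i) ->
  (\sum_i a i * x i) `^ p <= (\sum_i a i) `^ (p - 1) * \sum_i a i * x i `^ p.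
Proof.
move=> p1 a0 x0.
have p0 : 0 < p by apply: lt_trans p1.
set r := \sum_i a i; set S := \sum_i a i * x i.
have S0 : 0 <= S by apply: sumr_ge0 => i _; rewrite mulr_ge0.
have r0 : 0 <= r by apply: sumr_ge0.
have T0 : 0 <= \sum_i a i * x i `^ p by apply: sumr_ge0 => i _; rewrite mulr_ge0 ?powR_ge0.
have [rz|rpos] := eqVneq r 0.
  have az : forall i, a i = 0.
    by move=> i; apply: (psumr_eq0P (fun i _ => a0 i) rz).
  have -> : S = 0 by rewrite /S big1 // => i _; rewrite az mul0r.
  by rewrite powR0 ?gt_eqF // mulr_ge0 ?powR_ge0.
have rp : 0 < r by rewrite lt_neqAle eq_sym rpos.
pose m := S / r.
have m0 : 0 <= m by rewrite divr_ge0.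
have Sm : S = r * m by rewrite /m mulrC divfK.
have key : r * m `^ p <= \sum_i a i * x i `^ p.
  apply: le_trans (_ : \sum_i a i * (p * x i * m `^ (p - 1) - (p - 1) * m `^ p) <= _).
    rewrite (eq_bigr (fun i => p * m `^ (p - 1) * (a i * x i) - (p - 1) * m `^ p * a i)); last first.
      by move=> i _; ring.
    rewrite sumrB -!mulr_sumr -/S -/r Sm.
    have -> : p * m `^ (p - 1) * (r * m) = p * r * (m * m `^ (p - 1)) by ring.
    rewrite mulr_powRB1 //; lra.
  apply: ler_sum => i _; apply: ler_wpM2l => //; exact: tangent.
rewrite Sm powRM // -[in X in X <= _]mulr_powRB1 // -mulrA.
rewrite mulrCA; apply: ler_wpM2l => //; exact: powR_ge0.
Qed.

Lemma mat_bound (R : realType) (n : nat) (p : R) (A : 'M[R]_n) (K : R) (v : 'cV[R]_n) :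
  1 < p ->
  (forall j, \sum_i (\sum_k `|A i k|) `^ (p - 1) * `|A i j| <= K) ->
  \sum_i `|(A *m v) i 0| `^ p <= K * \sum_j `|v j 0| `^ p.
Proof.
move=> p1 HK.
have p0 : 0 < p by apply: lt_trans p1.
apply: le_trans (_ : \sum_i (\sum_k `|A i k|) `^ (p - 1) *
     \sum_j `|A i j| * `|v j 0| `^ p <= _).
  apply: ler_sum => i _; rewrite mxE.
  apply: le_trans (@jensen _ _ (fun j => `|A i j|) (fun j => `|v j 0|) p p1 (fun j => normr_ge0 _) (fun j => normr_ge0 _)).
  apply: ge0_ler_powR; rewrite ?nnegrE ?(ltW p0) //.
    by apply: sumr_ge0 => j _; rewrite mulr_ge0.
  apply: le_trans (ler_norm_sum _ _ _) _.
  by apply: ler_sum => j _; rewrite normrM.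
under eq_bigr do rewrite mulr_sumr.
rewrite exchange_big /= mulr_sumr; apply: ler_sum => j _.
rewrite (eq_bigr (fun i => ((\sum_k `|A i k|) `^ (p - 1) * `|A i j|) * `|v j 0| `^ p)); last first.
  by move=> i _; rewrite mulrA.
by rewrite -mulr_suml; apply: ler_wpM2r; rewrite ?powR_ge0 ?HK.
Qed.

Lemma pnorm_gt0 {R : realType} {n : nat} {p : R} {v : 'cV[R]_n} :
  0 < p -> v != 0 -> 0 < \sum_j `|v j 0| `^ p.
Proof.
move=> p0 vnz.
case: (pickP (fun i => v i 0 != 0)) => [i Hi | H]; last first.
  move/negP: vnz => []; apply/eqP/matrixP => k l; rewrite ord1 !mxE.
  by move: (H k) => /negbFE/eqP.
rewrite (bigD1 i) //=.
have h1 : 0 < `|v i 0| `^ p by rewrite powR_gt0 // normr_gt0.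
have h2 : 0 <= \sum_(j | j != i) `|v j 0| `^ p by apply: sumr_ge0 => j _; exact: powR_ge0.
lra.
Qed.

Lemma ratio_bound (R : realType) (n : nat) (p : R) (A : 'M[R]_n) (K : R) (v : 'cV[R]_n) :
  1 < p -> 0 <= K ->
  (forall j, \sum_i (\sum_k `|A i k|) `^ (p - 1) * `|A i j| <= K) ->
  v != 0 -> pnorm p (A *m v) / pnorm p v <= K `^ p^-1.
Proof.
move=> p1 K0 HK vnz.
have p0 : 0 < p by apply: lt_trans p1.
have S0 := pnorm_gt0 p0 vnz.
have pv0 : 0 < pnorm p v by rewrite /pnorm powR_gt0.
rewrite ler_pdivrMr // /pnorm -powRM //.
apply: ge0_ler_powR; rewrite ?nnegrE ?invr_ge0 ?(ltW p0) ?mulr_ge0 ?(ltW S0) //.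
  by apply: sumr_ge0 => i _; exact: powR_ge0.
exact: mat_bound.
exact: ltW S0.
Qed.

Lemma opnorm_le (R : realType) (n : nat) (p : R) (A : 'M[R]_n) (K : R) :
  (0 < n)%N -> 1 < p -> 0 <= K ->
  (forall j, \sum_i (\sum_k `|A i k|) `^ (p - 1) * `|A i j| <= K) ->
  opnorm p A <= K `^ p^-1.
Proof.
move=> n0 p1 K0 HK.
apply: ge_sup.
  exists (pnorm p (A *m const_mx 1) / pnorm p (const_mx 1 : 'cV[R]_n)).
  exists (const_mx 1); split => //.
  apply/eqP => /matrixP /(_ (Ordinal n0) 0); rewrite !mxE => /eqP.
  by rewrite oner_eq0.
by move=> r [v [vnz ->]]; exact: ratio_bound.
Qed.

Lemma Mmat_entry {R : realType} {n : nat} {s : 'cV[R]_n} i j :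
  Mmat s i j = (i == j)%:R * s i 0 - s i 0 * s j 0.
Proof. by rewrite /Mmat !mxE big_ord1 !mxE mulr_natl. Qed.

Lemma simplex_le1 {R : realType} {n : nat} {s : 'cV[R]_n} i :
  in_simplex s -> s i 0 <= 1.
Proof.
move=> [s0 s1]; rewrite -s1 (bigD1 i) //= lerDl.
by apply: sumr_ge0 => j _.
Qed.

Lemma Mmat_abs {R : realType} {n : nat} {s : 'cV[R]_n} i j :
  in_simplex s ->
  `|Mmat s i j| = s i 0 * ((i == j)%:R * (1 - 2 * s i 0) + s j 0).
Proof.
move=> hs; have [s0 _] := hs; have s1 := simplex_le1 i hs.
rewrite Mmat_entry; case: eqVneq => [<-|_]; rewrite ?eqxx.
  rewrite /= ger0_norm; first ring.
  have -> : 1 * s i 0 - s i 0 * s i 0 = s i 0 * (1 - s i 0) by ring.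
  by rewrite mulr_ge0 // subr_ge0.
by rewrite /= !mul0r !add0r normrN ger0_norm ?mulr_ge0.
Qed.

Lemma Mmat_abs_sym {R : realType} {n : nat} {s : 'cV[R]_n} i j :
  `|Mmat s i j| = `|Mmat s j i|.
Proof.
rewrite !Mmat_entry; have [->|ij] := eqVneq i j; first by [].
by rewrite /= !mul0r !add0r mulrC.
Qed.

Lemma Mmat_rowsum {R : realType} {n : nat} {s : 'cV[R]_n} i :
  in_simplex s -> \sum_j `|Mmat s i j| = 2 * s i 0 * (1 - s i 0).
Proof.
move=> hs; have [_ s1] := hs.
rewrite (eq_bigr _ (fun j _ => Mmat_abs i j hs)) -mulr_sumr big_split /= s1.
rewrite (bigD1 i) //= eqxx big1 ?addr0; first (rewrite /=; ring).
by move=> j /negbTE; rewrite eq_sym => ->; rewrite mul0r.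
Qed.

Lemma sum_lt_strict {R : realType} {n : nat} (f g : 'I_n -> R) i :
  (forall k, f k <= g k) -> f i < g i -> \sum_k f k < \sum_k g k.
Proof.
move=> fg fgi; rewrite (bigD1 i) //= [X in _ < X](bigD1 i) //=.
by apply: ltr_leD => //; apply: ler_sum => k _.
Qed.

Lemma rowval_le (R : realType) (x : R) : 2 * x * (1 - x) <= 2^-1.
Proof. have := sqr_ge0 (2 * x - 1); rewrite expr2 => h; nra. Qed.

Lemma rowval_lt (R : realType) (x : R) : x != 2^-1 -> 2 * x * (1 - x) < 2^-1.
Proof.
move=> hx.
have h : 0 < (2 * x - 1) ^+ 2.
  rewrite lt0r sqr_ge0 andbT sqrf_eq0 subr_eq0.
  apply: contra hx => /eqP h; apply/eqP.
  lra.
move: h; rewrite expr2 => h; nra.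
Qed.

Definition colw {R : realType} {n : nat} (p : R) (A : 'M[R]_n) j :=
  \sum_i (\sum_k `|A i k|) `^ (p - 1) * `|A i j|.

Lemma colw_le_r {R : realType} {n : nat} (s : 'cV[R]_n) (p : R) j :
  in_simplex s -> 1 < p ->
  colw p (Mmat s) j <= (2^-1) `^ (p - 1) * (2 * s j 0 * (1 - s j 0)).
Proof.
move=> hs p1; have [s0 _] := hs.
have p10 : 0 <= p - 1 by rewrite subr_ge0 ltW.
rewrite -(Mmat_rowsum j hs) mulr_sumr /colw; apply: ler_sum => i _.
rewrite Mmat_rowsum // (Mmat_abs_sym j i); apply: ler_wpM2r => //.
apply: ge0_ler_powR => //; rewrite ?nnegrE ?rowval_le //.
by rewrite mulr_ge0 ?mulr_ge0 ?subr_ge0 ?simplex_le1.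
Qed.

Lemma colw_le {R : realType} {n : nat} (s : 'cV[R]_n) (p : R) j :
  in_simplex s -> 1 < p -> colw p (Mmat s) j <= (2^-1) `^ p.
Proof.
move=> hs p1; apply: le_trans (colw_le_r s p j hs p1) _.
have p0 : 0 < p by apply: lt_trans p1.
rewrite -[X in _ <= X](mulr_powRB1 _ p0) ?invr_ge0 // mulrC.
by apply: ler_wpM2r; rewrite ?powR_ge0 ?rowval_le.
Qed.

Lemma colw_lt {R : realType} {n : nat} (s : 'cV[R]_n) (p : R) j :
  in_simplex s -> 1 < p ->
  (forall a b : 'I_n, a != b -> s a 0 = 2^-1 -> s b 0 = 2^-1 -> False) ->
  colw p (Mmat s) j < (2^-1) `^ p.
Proof.
move=> hs p1 H; have [s0 ssum] := hs.
have p0 : 0 < p by apply: lt_trans p1.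
have p10 : 0 < p - 1 by rewrite subr_gt0.
have hp : (2^-1 : R) `^ p = (2^-1) `^ (p - 1) * 2^-1.
  by rewrite -[LHS](mulr_powRB1 _ p0) ?invr_ge0 // mulrC.
have h2 : (0 : R) < (2^-1) `^ (p - 1) by rewrite powR_gt0.
have [sj|sj] := eqVneq (s j 0) 2^-1; last first.
  apply: le_lt_trans (colw_le_r s p j hs p1) _.
  by rewrite hp ltr_pM2l // rowval_lt.
case: (pickP (fun i => (i != j) && (0 < s i 0))) => [i /andP[ij si] | Hn]; last first.
  exfalso.
  have : \sum_(i | i != j) s i 0 = 0.
    apply: big1 => i ij; apply/eqP; rewrite eq_le s0 andbT.
    by move: (Hn i); rewrite ij /= => /negbT; rewrite -leNgt.
  move: ssum; rewrite (bigD1 j) //= sj => h1 h2'; lra.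
rewrite /colw hp.
have -> : (2^-1) `^ (p - 1) * 2^-1 =
    \sum_i (2^-1) `^ (p - 1) * `|Mmat s i j|.
  rewrite -mulr_sumr; congr (_ * _).
  rewrite (eq_bigr _ (fun k _ => Mmat_abs_sym k j)) Mmat_rowsum // sj; lra.
apply: (@sum_lt_strict _ _ _ _ i) => [k|].
  apply: ler_wpM2r => //; rewrite Mmat_rowsum //.
  apply: ge0_ler_powR; rewrite ?nnegrE ?rowval_le ?(ltW p10) //.
  by rewrite mulr_ge0 ?mulr_ge0 ?subr_ge0 ?simplex_le1.
have sij : s i 0 != 2^-1 by apply/eqP => e; exact: (H i j ij e sj).
rewrite ltr_pM2r; last first.
  by rewrite Mmat_abs // (negbTE ij) mul0r add0r mulr_gt0 // sj.
rewrite Mmat_rowsum //; apply: gt0_ltr_powR; rewrite ?nnegrE ?rowval_lt //.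
by rewrite mulr_ge0 ?mulr_ge0 ?subr_ge0 ?simplex_le1.
Qed.

Lemma half_pow {R : realType} {p : R} : 0 < p -> ((2^-1 : R) `^ p) `^ p^-1 = 2^-1.
Proof. by move=> p0; rewrite -powRrM mulfV ?gt_eqF // powRr1 // invr_ge0. Qed.

Lemma opnorm_le_half {R : realType} {n : nat} (s : 'cV[R]_n) (p : R) :
  (0 < n)%N -> 1 < p -> in_simplex s -> opnorm p (Mmat s) <= 2^-1.
Proof.
move=> n0 p1 hs; have p0 : 0 < p by apply: lt_trans p1.
rewrite -(half_pow p0); apply: (@opnorm_le _ _ p (Mmat s) _ n0 p1 (powR_ge0 _ _)).
by move=> j; exact: (colw_le s p j hs p1).
Qed.

Lemma opnorm_lt_half {R : realType} {n : nat} (s : 'cV[R]_n) (p : R) :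
  (0 < n)%N -> 1 < p -> in_simplex s ->
  (forall a b : 'I_n, a != b -> s a 0 = 2^-1 -> s b 0 = 2^-1 -> False) ->
  opnorm p (Mmat s) < 2^-1.
Proof.
move=> n0 p1 hs H; have p0 : 0 < p by apply: lt_trans p1.
pose K := \big[Order.max/0]_j colw p (Mmat s) j.
have K0 : 0 <= K by apply: bigmax_ge_id.
have HK : forall j, colw p (Mmat s) j <= K by move=> j; apply: le_bigmax.
have Klt : K < (2^-1) `^ p.
  by apply: bigmax_lt; rewrite ?powR_gt0 // => j _; exact: colw_lt.
apply: le_lt_trans (@opnorm_le _ _ p (Mmat s) K n0 p1 K0 HK) _.
rewrite -(half_pow p0); apply: gt0_ltr_powR; rewrite ?invr_gt0 ?nnegrE ?powR_ge0 //.
Qed.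

Lemma build_perm {R : realType} {n : nat} (s : 'cV[R]_n) (a b : 'I_n) :
  (2 < n)%N -> in_simplex s -> a != b -> s a 0 = 2^-1 -> s b 0 = 2^-1 ->
  exists sigma : {perm 'I_n}, forall i : 'I_n, s i 0 = half_half R n (sigma i) 0.
Proof.
move=> n2 [s0 s1] ab sa sb.
have h0 : (0 < n)%N by apply: (@ltn_trans 2).
have h1 : (1 < n)%N by apply: (@ltn_trans 2).
pose i0 := Ordinal h0; pose i1 := Ordinal h1.
have rest : forall k, k != a -> k != b -> s k 0 = 0.
  have : \sum_(k | (k != a) && (k != b)) s k 0 = 0.
    move: s1; rewrite (bigD1 a) //= (bigD1 b) //= ?sa ?sb; last by rewrite eq_sym.
    rewrite (eq_bigl (fun k => (k != a) && (k != b))); first lra.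
    by move=> k /=; rewrite andbC.
  move/psumr_eq0P => h k ka kb; apply: h; [by move=> i _; exact: s0|by rewrite ka kb].
pose b' := tperm a i0 b.
have b'0 : b' != i0.
  apply/eqP => e; move/negP: ab; apply; apply/eqP.
  by rewrite -(tpermK a i0 b) -/b' e tpermR.
exists (tperm a i0 * tperm b' i1)%g => i; rewrite !mxE permM.
have [->|ia] := eqVneq i a.
  by rewrite tpermL tpermD //=.
have [->|ib] := eqVneq i b.
  by rewrite -/b' tpermL sb.
rewrite rest //.
set k := tperm b' i1 (tperm a i0 i).
have kne0 : k != i0.
  rewrite /k; apply/eqP => e.
  have : tperm b' i1 (tperm a i0 i) = tperm b' i1 (tperm a i0 a).
    by rewrite e tpermL tpermD. 
  by move/perm_inj/perm_inj/eqP; rewrite (negbTE ia).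
have kne1 : k != i1.
  rewrite /k; apply/eqP => e.
  have : tperm b' i1 (tperm a i0 i) = tperm b' i1 (tperm a i0 b) by rewrite e -/b' tpermL.
  by move/perm_inj/perm_inj/eqP; rewrite (negbTE ib).
case: ifP => // klt.
exfalso; move: klt kne0 kne1; case: k => [[|[|m]] km] //= _.
Qed.

Lemma sum_delta_r {R : realType} {n : nat} (F : 'I_n -> R) (a : 'I_n) :
  \sum_k F k * (k == a)%:R = F a.
Proof.
rewrite (bigD1 a) //= eqxx mulr1 big1 ?addr0 // => k /negbTE ->.
by rewrite mulr0.
Qed.

Lemma pnormZ {R : realType} {n : nat} (p c : R) (v : 'cV[R]_n) :
  0 < p -> 0 <= c -> pnorm p (c *: v) = c * pnorm p v.
Proof.
move=> p0 c0; rewrite /pnorm.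
rewrite (eq_bigr (fun j => c `^ p * `|v j 0| `^ p)); last first.
  by move=> j _; rewrite mxE normrM (ger0_norm c0) powRM.
rewrite -mulr_sumr powRM ?powR_ge0 //.
rewrite -powRrM mulfV ?gt_eqF // powRr1 //.
by apply: sumr_ge0 => j _; exact: powR_ge0.
Qed.

Lemma Mmat_mul {R : realType} {n : nat} (s v : 'cV[R]_n) i :
  (Mmat s *m v) i 0 = \sum_k Mmat s i k * v k 0.
Proof. by rewrite mxE. Qed.

Theorem lemma4 (R : realType) (n : nat) (p : R) (s : 'cV[R]_n) :
  (2 < n)%N -> 1 < p -> in_simplex s ->
  (opnorm p (Mmat s) = 2^-1 <->
   exists sigma : {perm 'I_n}, forall i : 'I_n, s i 0 = half_half R n (sigma i) 0).
Proof.
move=> n2 p1 hs.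
have n0 : (0 < n)%N by apply: (@ltn_trans 2).
have h1 : (1 < n)%N by apply: (@ltn_trans 2).
have p0 : 0 < p by apply: lt_trans p1.
split.
  move=> hn.
  have [[a [b [ab sa sb]]]|nex] := pselect (exists a b : 'I_n,
     [/\ a != b, s a 0 = 2^-1 & s b 0 = 2^-1]).
    exact: (build_perm s a b n2 hs ab sa sb).
  exfalso.
  have : opnorm p (Mmat s) < 2^-1.
    apply: opnorm_lt_half => // a b ab sa sb; apply: nex; exists a, b; by split.
  by rewrite hn ltxx.
move=> [sigma Hs].
pose i0 := Ordinal n0; pose i1 := Ordinal h1.
pose a := (sigma^-1)%g i0; pose b := (sigma^-1)%g i1.
have sa : s a 0 = 2^-1 by rewrite Hs /a permKV mxE.
have sb : s b 0 = 2^-1 by rewrite Hs /b permKV mxE.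
have ab : a != b.
  apply/eqP => /perm_inj /eqP; by [].
pose v : 'cV[R]_n := \col_i ((i == a)%:R - (i == b)%:R).
have Mv : Mmat s *m v = 2^-1 *: v.
  apply/matrixP => i j; rewrite ord1 Mmat_mul [RHS]mxE [v i 0]mxE.
  rewrite (eq_bigr (fun k => Mmat s i k * (k == a)%:R - Mmat s i k * (k == b)%:R)); last first.
    by move=> k _; rewrite [v k 0]mxE mulrBr.
  rewrite sumrB !sum_delta_r !Mmat_entry sa sb.
  have [->|ia] := eqVneq i a.
    by rewrite (negbTE ab) sa /=; ring.
  have [->|ib] := eqVneq i b.
    by rewrite sb /=; ring.
  by rewrite /=; ring.
have vnz : v != 0.
  apply/eqP => /matrixP /(_ a 0); rewrite !mxE eqxx (negbTE ab) subr0 => /eqP.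
  by rewrite oner_eq0.
apply/eqP; rewrite eq_le opnorm_le_half //=.
have hub : forall r, (fun r => exists v : 'cV[R]_n, v != 0 /\ r = pnorm p (Mmat s *m v) / pnorm p v) r -> r <= 2^-1.
  move=> r [w [wnz ->]]; rewrite -(half_pow p0).
  apply: (@ratio_bound _ _ p (Mmat s) _ w p1 (powR_ge0 _ _) _ wnz).
  by move=> j; exact: (colw_le s p j hs p1).
apply: (ub_le_sup (ex_intro _ 2^-1 hub)).
exists v; split => //.
have pv0 : 0 < pnorm p v by rewrite /pnorm powR_gt0 // pnorm_gt0.
by rewrite Mv pnormZ ?invr_ge0 // mulfK ?gt_eqF.
Qed.
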